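(* Let $\mathbf{F}$ be a Baire foliage tree on a topological space $X$, let $p\in X$ and $v\in\mathrm{scope}_{\mathbf{F}}(p)$. Then there is a foliage tree $\mathbf{G}$ such that: (d1) $0_{\mathbf{G}}=v$ and $\max\mathbf{G}=\mathrm{sons}_{\mathbf{G}}(0_{\mathbf{G}})$; (d2) $\mathbf{G}_v=\mathbf{F}_v\setminus\{p\}$, and $\mathbf{G}_v$ is the union of the pairwise disjoint sets $\mathbf{F}_m$, $m\in\max\mathbf{G}$; (d3) $\mathbf{G}$ is a foliage graft for $\mathbf{F}$; (d4) $\mathrm{impl}\,\mathbf{G}=\varnothing$; (d5) $\mathbf{G}$ is $\omega$-branching, locally strict, open in $X$, has bounded chains, and has height $2$.
   Context: $\omega=\{0,1,2,\dots\}$, ${}^{<\omega}\omega$ is the set of finite sequences of natural numbers. A tree is a strict partial order in which the set of predecessors of every node is well-ordered; $\mathrm{height}(x)$ is the ordinal isomorphic to the set of predecessors of $x$; the height of a tree is the least ordinal $\beta$ such that no node has height $\beta$; a branch is a maximal chain; $\mathrm{sons}(x)$ is the set of immediate successors of $x$; $\max$ is the set of maximal nodes; $0$ denotes the least node. A tree is $\omega$-branching if every non-maximal node has exactly $\omega$ many sons; it has bounded chains if every nonempty chain $C$ has a node $v$ with $c\leq v$ for all $c\in C$. A foliage tree is a pair $\mathbf{F}=(T,l)$ with $T$ a tree (skeleton) and $l$ a function on its nodes, $\mathbf{F}_x:=l(x)$; tree notions apply via the skeleton; $\mathrm{scope}_{\mathbf{F}}(p)=\{x:p\in\mathbf{F}_x\}$.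 $\mathbf{F}$ is nonincreasing if $y\geq x$ implies $\mathbf{F}_y\subseteq\mathbf{F}_x$. $\mathbf{F}$ is locally strict if each non-maximal leaf $\mathbf{F}_x$ is the disjoint union of $\mathbf{F}_s$, $s\in\mathrm{sons}(x)$; has strict branches if it has a node and for each branch $B$, $\bigcap_{x\in B}\mathbf{F}_x$ is a singleton; is open in $X$ if all leaves are open in $X$; is a foliage $\omega,\omega$-tree if its skeleton is order-isomorphic to $({}^{<\omega}\omega,\subsetneq)$. A Baire foliage tree on $X$ is an open in $X$, locally strict foliage $\omega,\omega$-tree with strict branches and $\mathbf{F}_{0_{\mathbf{F}}}=X$. A tree $\mathcal{G}$ is a graft for a tree $\mathcal{T}$ if $\mathcal{G}$ has more than one node, has a least node $0_{\mathcal{G}}$, the common nodes of $\mathcal{G}$ and $\mathcal{T}$ are exactly $\{0_{\mathcal{G}}\}\cup\max\mathcal{G}$, and for common nodes $x,y$: $x<_{\mathcal{G}}y$ iff $x<_{\mathcal{T}}y$. $\mathrm{impl}\,\mathcal{G}$ is the set of nodes of $\mathcal{G}$ other than $0_{\mathcal{G}}$ and the maximal ones. For a nonincreasing foliage tree $\mathbf{F}$, a foliage graft for $\mathbf{F}$ is a nonincreasing foliage tree $\mathbf{G}$ whose skeleton is a graft for the skeleton of $\mathbf{F}$, with $\mathbf{G}_{0_{\mathbf{G}}}\subseteq\mathbf{F}_{0_{\mathbf{G}}}$ and $\mathbf{G}_m=\mathbf{F}_m$ for all $m\in\max\mathbf{G}$. *)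

(* Defs.v *)
From Stdlib Require Import List.
From mathcomp Require Import all_boot.
From mathcomp Require Import boolp classical_sets topology.
Import ListNotations.

Set Implicit Arguments.
Unset Strict Implicit.
Unset Printing Implicit Defensive.

Local Open Scope classical_set_scope.

(** A foliage tree: node set (skeleton carrier) inside a universe [N] of
    possible nodes, the strict order of the skeleton, and the leaf function. *)
Record foliage (N X : Type) := Foliage {
  fnode : set N;
  flt : N -> N -> Prop;
  leaf : N -> set X
}.

Section Defs.
Context {N X : Type}.
Implicit Types F G : foliage N X.

Definition fle F x y := x = y \/ flt F x y.

Definition well_ordered (lt : N -> N -> Prop) (S : set N) : Prop :=
  (forall a b, S a -> S b -> a = b \/ lt a b \/ lt b a) /\
  (forall A : set N, A `<=` S -> A !=set0 ->
     exists m, A m /\ forall a, A a -> a <> m -> lt m a).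

Definition preds F x : set N := [set y | flt F y x].

Definition is_tree F : Prop :=
  (forall x y, flt F x y -> fnode F x /\ fnode F y) /\
  (forall x, ~ flt F x x) /\
  (forall x y z, flt F x y -> flt F y z -> flt F x z) /\
  (forall x, fnode F x -> well_ordered (flt F) (preds F x)).

Definition has_height F x (k : nat) : Prop :=
  exists s : list N, NoDup s /\ length s = k /\ (forall y, In y s <-> flt F y x).

Definition tree_height F (n : nat) : Prop :=
  (forall k, (k < n)%N -> exists x, fnode F x /\ has_height F x k) /\
  ~ (exists x, fnode F x /\ has_height F x n).

Definition least_node F r : Prop :=
  fnode F r /\ forall x, fnode F x -> x <> r -> flt F r x.

Definition sons F x : set N :=
  [set y | fnode F y /\ flt F x y /\ ~ (exists z, flt F x z /\ flt F z y)].

Definition fmax F : set N := [set x | fnode F x /\ ~ (exists y, flt F x y)].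

Definition chain F (C : set N) : Prop :=
  C `<=` fnode F /\ forall a b, C a -> C b -> a = b \/ flt F a b \/ flt F b a.

Definition branch F (B : set N) : Prop :=
  chain F B /\ forall C, chain F C -> B `<=` C -> C = B.

Definition scope F (p : X) : set N := [set x | fnode F x /\ leaf F x p].

Definition nonincreasing F : Prop :=
  forall x y, fnode F x -> fnode F y -> fle F x y -> leaf F y `<=` leaf F x.

Definition locally_strict F : Prop :=
  forall x, fnode F x -> ~ fmax F x ->
    leaf F x = \bigcup_(s in sons F x) leaf F s /\
    (forall s s', sons F x s -> sons F x s' -> s <> s' ->
       leaf F s `&` leaf F s' = set0).

Definition strict_branches F : Prop :=
  fnode F !=set0 /\
  forall B, branch F B -> exists q : X, \bigcap_(x in B) leaf F x = [set q].

Definition strict_prefix (s t : list nat) : Prop :=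
  exists u, u <> [] /\ t = s ++ u.

(** Skeleton order-isomorphic to ( ^{<omega}omega, strict inclusion ). *)
Definition omega_omega F : Prop :=
  exists f : list nat -> N,
    (forall s, fnode F (f s)) /\
    (forall x, fnode F x -> exists s, f s = x) /\
    (forall s t, f s = f t -> s = t) /\
    (forall s t, flt F (f s) (f t) <-> strict_prefix s t).

Definition omega_branching F : Prop :=
  forall x, fnode F x -> ~ fmax F x ->
    exists g : nat -> N,
      (forall n m, g n = g m -> n = m) /\
      (forall n, sons F x (g n)) /\
      (forall y, sons F x y -> exists n, g n = y).

Definition bounded_chains F : Prop :=
  forall C, chain F C -> C !=set0 ->
    exists v, fnode F v /\ forall c, C c -> fle F c v.

Definition impl F r : set N := [set x | fnode F x /\ x <> r /\ ~ fmax F x].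

Definition graft G F : Prop :=
  is_tree G /\
  (exists x y, fnode G x /\ fnode G y /\ x <> y) /\
  (exists r, least_node G r /\
     (forall x, (fnode G x /\ fnode F x) <-> (x = r \/ fmax G x))) /\
  (forall x y, fnode G x -> fnode F x -> fnode G y -> fnode F y ->
     (flt G x y <-> flt F x y)).

Definition foliage_graft G F : Prop :=
  is_tree G /\ nonincreasing G /\ graft G F /\
  (forall r, least_node G r -> leaf G r `<=` leaf F r) /\
  (forall m, fmax G m -> leaf G m = leaf F m).

End Defs.

Definition open_in {N : Type} {X : topologicalType} (F : foliage N X) : Prop :=
  forall x, fnode F x -> open (leaf F x).

Definition baire_foliage {N : Type} {X : topologicalType} (F : foliage N X) : Prop :=
  is_tree F /\ open_in F /\ locally_strict F /\ omega_omega F /\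
  strict_branches F /\
  (forall r, least_node F r -> leaf F r = setT).

(* Main.v *)
Require Import Defs.
From mathcomp Require Import all_boot.
From mathcomp Require Import boolp classical_sets topology.
From mathcomp Require Import zify.
From Stdlib Require Import ClassicalEpsilon.
From Stdlib Require Cantor List.
Local Open Scope classical_set_scope.

Lemma sp_size (s t : seq nat) : strict_prefix s t -> (size s < size t)%N.
Proof.
case=> u [hu ->]; rewrite size_cat; case: u hu => [//|a u] _ /=; lia.
Qed.

Lemma sp_cons (s : seq nat) a u : strict_prefix s (s ++ a :: u).
Proof. by exists (a :: u). Qed.

Lemma cat_cancel (s u w : seq nat) : s ++ u = s ++ w -> u = w.
Proof. by elim: s => //= x s IH [] /IH. Qed.

Lemma prefix_cmp (w w' u u' : seq nat) : w ++ u = w' ++ u' ->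
  w = w' \/ strict_prefix w w' \/ strict_prefix w' w.
Proof.
elim: w w' => [|a w IH] [|a' w'] /=.
- by left.
- by move=> _; right; left; exists (a' :: w').
- by move=> _; right; right; exists (a :: w).
- case=> <- /IH [->|[[x [hx ->]]|[x [hx ->]]]]; [by left| |].
  + by right; left; exists x.
  + by right; right; exists x.
Qed.

Definition diverge (x y : seq nat) := exists s a a' u u',
  a <> a' /\ x = s ++ a :: u /\ y = s ++ a' :: u'.

Lemma diverge_sym x y : diverge x y -> diverge y x.
Proof. by case=> [s [a [a' [u [u' [h [-> ->]]]]]]]; exists s, a', a, u', u; split=> // e; apply: h. Qed.

Lemma diverge_neq x y : diverge x y -> x <> y.
Proof.
case=> [s [a [a' [u [u' [h [-> ->]]]]]]] /cat_cancel e.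
by apply: h; case: e.
Qed.

Lemma diverge_nsp x y : diverge x y -> ~ strict_prefix x y.
Proof.
case=> [s [a [a' [u [u' [h [-> ->]]]]]]] [w [_]].
rewrite -catA => /cat_cancel e.
by apply: h; case: e.
Qed.

Definition skip (a j : nat) := if (j < a)%N then j else j.+1.

Lemma skip_neq a j : skip a j <> a.
Proof. rewrite /skip; case: ifP => h; lia. Qed.

Lemma skip_inj a j j' : skip a j = skip a j' -> j = j'.
Proof. rewrite /skip; case: ifP => h; case: ifP => h'; lia. Qed.

Lemma skip_surj a n : n <> a -> exists j, skip a j = n.
Proof.
move=> h; case: (ltnP n a) => h'.
- by exists n; rewrite /skip h'.
- exists n.-1; rewrite /skip; case: ifP => h2; lia.
Qed.

Fixpoint bseq (nx : seq nat -> nat) (s0 : seq nat) (i : nat) : seq nat :=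
  match i with 0 => s0 | i'.+1 => bseq nx s0 i' ++ [:: nx (bseq nx s0 i')] end.

Definition mm nx s0 i j := bseq nx s0 i ++ [:: skip (nx (bseq nx s0 i)) j].

Lemma bseq_size nx s0 i : size (bseq nx s0 i) = (size s0 + i)%N.
Proof. elim: i => [|i IH] /=; rewrite ?size_cat ?IH /=; lia. Qed.

Lemma bseq_ext nx s0 i k : exists u, bseq nx s0 (i + k.+1) = bseq nx s0 i ++ nx (bseq nx s0 i) :: u.
Proof.
elim: k => [|k [u IH]]; first by exists [::]; rewrite addn1.
exists (rcons u (nx (bseq nx s0 (i + k.+1)))).
by rewrite addnS /= IH -catA /= cats1.
Qed.

Lemma bseq_pre nx s0 i k : exists u, bseq nx s0 (i + k) = bseq nx s0 i ++ u.
Proof.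
case: k => [|k]; first by exists [::]; rewrite addn0 cats0.
by case: (bseq_ext nx s0 i k) => u ->; exists (nx (bseq nx s0 i) :: u).
Qed.



Lemma mm_s0 nx s0 i j : exists a u, mm nx s0 i j = s0 ++ a :: u.
Proof.
case: (bseq_pre nx s0 0 i) => u; rewrite add0n /= => e.
rewrite /mm e -catA; case: u e => [|a u] _ /=.
  by exists (skip (nx (s0 ++ [::])) j), [::].
by exists a, (u ++ [:: skip (nx (s0 ++ a :: u)) j]).
Qed.

Lemma mm_div nx s0 i j i' j' : (i, j) <> (i', j') -> diverge (mm nx s0 i j) (mm nx s0 i' j').
Proof.
wlog: i j i' j' / (i <= i')%N.
  move=> W h; case: (leqP i i') => hi; first exact: W.
  apply: diverge_sym; apply: W; [lia| by move=> e; apply: h; case: e => -> ->].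
move=> hi h; case: (ltnP i i') => hlt.
- have -> : i' = (i + (i' - i).-1.+1)%N by lia.
  case: (bseq_ext nx s0 i (i' - i).-1) => u e.
  exists (bseq nx s0 i), (skip (nx (bseq nx s0 i)) j), (nx (bseq nx s0 i)), [::],
    (u ++ [:: skip (nx (bseq nx s0 (i + (i' - i).-1.+1))) j']).
  split; first exact: skip_neq.
  by rewrite /mm e -catA.
- have ei : i = i' by lia.
  subst i'.
  exists (bseq nx s0 i), (skip (nx (bseq nx s0 i)) j), (skip (nx (bseq nx s0 i)) j'), [::], [::].
  split => //; by move/skip_inj => e; apply: h; rewrite e.
Qed.

Lemma sonsF {N : Type} {X : Type} {F : foliage N X} {f : seq nat -> N}
  (Htree : is_tree F) (Hn : forall s, fnode F (f s))
  (Hs : forall x, fnode F x -> exists s, f s = x)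
  (Ho : forall s t, flt F (f s) (f t) <-> strict_prefix s t) s y :
  sons F (f s) y <-> exists n, y = f (s ++ [:: n]).
Proof.
split.
- case=> [hy [hlt hno]]; case: (Hs y hy) => t et; subst y.
  move/Ho: hlt => [u [hu et]]; subst t.
  case: u hu hno hy => [//|a [|c u']] _ hno _; first by exists a.
  exfalso; apply: hno; exists (f (s ++ [:: a])); split; apply/Ho.
    by exists [:: a].
  by exists (c :: u'); split=> //; rewrite -catA.
- case=> n ->; split; first exact: Hn.
  split; first by apply/Ho; exists [:: n].
  case=> z [h1 h2]; case: Htree => Hnd _.
  case: (Hs z (Hnd _ _ h1).2) => w ew; subst z.
  move/Ho/sp_size: h1; move/Ho/sp_size: h2; rewrite size_cat /=; lia.
Qed.

Lemma leaf_sonsF {N : Type} {X : Type} {F : foliage N X} {f : seq nat -> N}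
  (Htree : is_tree F) (Hls : locally_strict F) (Hn : forall s, fnode F (f s))
  (Hs : forall x, fnode F x -> exists s, f s = x)
  (Hi : forall s t, f s = f t -> s = t)
  (Ho : forall s t, flt F (f s) (f t) <-> strict_prefix s t) s :
  (forall y, leaf F (f s) y <-> exists n, leaf F (f (s ++ [:: n])) y) /\
  (forall n n' y, n <> n' -> leaf F (f (s ++ [:: n])) y -> leaf F (f (s ++ [:: n'])) y -> False).
Proof.
have nm : ~ fmax F (f s).
  by case=> _; apply; exists (f (s ++ [:: 0])); apply/Ho; exists [:: 0].
case: (Hls (f s) (Hn s) nm) => eq disj; split.
- move=> y; rewrite eq; split.
  + by case=> z /(sonsF Htree Hn Hs Ho) [n ->] h; exists n.
  + case=> n h; exists (f (s ++ [:: n])) => //; apply/(sonsF Htree Hn Hs Ho); by exists n.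
- move=> n n' y hne h1 h2.
  have hs1 : sons F (f s) (f (s ++ [:: n])) by apply/(sonsF Htree Hn Hs Ho); exists n.
  have hs2 : sons F (f s) (f (s ++ [:: n'])) by apply/(sonsF Htree Hn Hs Ho); exists n'.
  have hne' : f (s ++ [:: n]) <> f (s ++ [:: n']).
    by move/Hi/cat_cancel => [].
  have := disj _ _ hs1 hs2 hne'; move/seteqP => [E _].
  exact: (E y (conj h1 h2)).
Qed.

Lemma leaf_monoF {N : Type} {X : Type} {F : foliage N X} {f : seq nat -> N}
  (Htree : is_tree F) (Hls : locally_strict F) (Hn : forall s, fnode F (f s))
  (Hs : forall x, fnode F x -> exists s, f s = x)
  (Hi : forall s t, f s = f t -> s = t)
  (Ho : forall s t, flt F (f s) (f t) <-> strict_prefix s t) s u :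
  leaf F (f (s ++ u)) `<=` leaf F (f s).
Proof.
elim: u s => [|a u IH] s y; first by rewrite cats0.
rewrite -cat_rcons => /IH; rewrite -cats1 => h.
apply/(proj1 (leaf_sonsF Htree Hls Hn Hs Hi Ho s)); by exists a.
Qed.

Lemma leaf_divF {N : Type} {X : Type} {F : foliage N X} {f : seq nat -> N}
  (Htree : is_tree F) (Hls : locally_strict F) (Hn : forall s, fnode F (f s))
  (Hs : forall x, fnode F x -> exists s, f s = x)
  (Hi : forall s t, f s = f t -> s = t)
  (Ho : forall s t, flt F (f s) (f t) <-> strict_prefix s t) x y z :
  diverge x y -> leaf F (f x) z -> leaf F (f y) z -> False.
Proof.
case=> [s [a [a' [u [u' [h [-> ->]]]]]]] h1 h2.
have m := leaf_monoF Htree Hls Hn Hs Hi Ho.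
move: h1 h2; rewrite -!cat_rcons -!cats1 => /m h1 /m h2.
exact: (proj2 (leaf_sonsF Htree Hls Hn Hs Hi Ho s) a a' z h h1 h2).
Qed.

Theorem lemma18 (N : Type) (X : topologicalType) (F : foliage N X)
  (p : X) (v : N) :
  baire_foliage F -> scope F p v ->
  exists G : foliage N X,
    is_tree G /\
    (* (d1) *)
    (least_node G v /\ fmax G = sons G v) /\
    (* (d2) *)
    (leaf G v = leaf F v `\ p /\
     leaf G v = \bigcup_(m in fmax G) leaf F m /\
     (forall m m', fmax G m -> fmax G m' -> m <> m' ->
        leaf F m `&` leaf F m' = set0)) /\
    (* (d3) *)
    foliage_graft G F /\
    (* (d4) *)
    impl G v = set0 /\
    (* (d5) *)
    (omega_branching G /\ locally_strict G /\ open_in G /\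
     bounded_chains G /\ tree_height G 2).
Proof.
move=> [Htree [Hopen [Hls [[f [Hn [Hs [Hi Ho]]]] [[_ Hsb] Hroot]]]]] [Hv Hp].
case: (Hs v Hv) => s0 ev; subst v.
have LS := leaf_sonsF Htree Hls Hn Hs Hi Ho.
have LM := leaf_monoF Htree Hls Hn Hs Hi Ho.
have LD := leaf_divF Htree Hls Hn Hs Hi Ho.
pose nx := fun t => epsilon (inhabits 0%N) (fun n => leaf F (f (t ++ [:: n])) p).
have nx_spec : forall t, leaf F (f t) p -> leaf F (f (t ++ [:: nx t])) p.
  move=> t /(proj1 (LS t) p) [n hn].
  by apply: (epsilon_spec (inhabits 0%N) (fun n => leaf F (f (t ++ [:: n])) p)); exists n.
have bp : forall i, leaf F (f (bseq nx s0 i)) p.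
  by elim=> [|i IH] //=; apply: nx_spec.
pose M := [set x | exists i j, x = f (mm nx s0 i j)].
have Mneq : forall x, M x -> x <> f s0.
  move=> x [i [j ->]] /Hi; case: (mm_s0 nx s0 i j) => a [u ->] /(congr1 size).
  rewrite size_cat /=; lia.
have Mnode : M `<=` fnode F by move=> x [i [j ->]].
have Mlt : forall x, M x -> flt F (f s0) x.
  move=> x [i [j ->]]; apply/Ho; case: (mm_s0 nx s0 i j) => a [u ->]; exact: sp_cons.
have Mdisj : forall x x', M x -> M x' -> x <> x' -> leaf F x `&` leaf F x' = set0.
  move=> _ _ [i [j ->]] [i' [j' ->]] hne.
  have hd : diverge (mm nx s0 i j) (mm nx s0 i' j').
    by apply: mm_div => e; apply: hne; case: e => -> ->.
  apply/seteqP; split; last exact: sub0set.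
  move=> z [h1 h2]; exact: (LD _ _ _ hd h1 h2).
have core : leaf F (f s0) `\ p = \bigcup_(x in M) leaf F x.
  apply/seteqP; split.
  - move=> y [hy hyp].
    pose B := [set x | exists i w u, x = f w /\ bseq nx s0 i = w ++ u].
    have hB : branch F B.
      have Bchain : chain F B.
        split; first by move=> x [i [w [u [-> _]]]].
        move=> _ _ [i [w [u [-> e]]]] [i' [w' [u' [-> e']]]].
        case: (bseq_pre nx s0 i i') => v1 e1; case: (bseq_pre nx s0 i' i) => v2 e2.
        have : w ++ (u ++ v1) = w' ++ (u' ++ v2).
          by rewrite !catA -e -e' -e1 -e2 addnC.
        case/prefix_cmp => [->|[h|h]]; [by left | right; left; apply/Ho | right; right; apply/Ho] => //.
      split=> // C hC hBC; apply/seteqP; split; last exact: hBC.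
      move=> c hc; have hcn := (proj1 hC) c hc.
      case: (Hs c hcn) => w ew; subst c.
      have hbi : C (f (bseq nx s0 (size w))).
        by apply: hBC; exists (size w), (bseq nx s0 (size w)), [::]; rewrite cats0.
      case: ((proj2 hC) _ _ hc hbi) => [/Hi e|[/Ho [u [_ e]]|/Ho/sp_size]].
      + by exists (size w), w, [::]; split=> //; rewrite cats0 -e.
      + by exists (size w), w, u; split.
      + rewrite bseq_size; lia.
    case: (Hsb B hB) => q hq.
    have pq : p = q.
      have : (\bigcap_(x in B) leaf F x) p.
        move=> x [i [w [u [-> e]]]]; apply: (LM w u); rewrite -e; exact: bp.
      by rewrite hq.
    have hnot : ~ (\bigcap_(x in B) leaf F x) y.
      by rewrite hq => e; apply: hyp; rewrite pq; exact: e.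
    have [i hi] : exists i, ~ leaf F (f (bseq nx s0 i)) y.
      apply: NNPP => hn; apply: hnot => x [i [w [u [-> e]]]].
      apply: (LM w u); rewrite -e; apply: NNPP => h; apply: hn; by exists i.
    have [k [hk hk1]] : exists k, leaf F (f (bseq nx s0 k)) y /\ ~ leaf F (f (bseq nx s0 k.+1)) y.
      elim: i hi => [|i IH] hi; first by case: hi.
      case: (classic (leaf F (f (bseq nx s0 i)) y)) => h; [by exists i | exact: IH].
    move/(proj1 (LS _) y): hk => [n hn].
    have hne : n <> nx (bseq nx s0 k) by move=> e; apply: hk1; rewrite e in hn; exact: hn.
    case: (skip_surj _ _ hne) => j ej.
    exists (f (mm nx s0 k j)); first by exists k, j.
    by rewrite /mm ej.
  - move=> y [x [i [j ->]] hy]; split.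
    + case: (mm_s0 nx s0 i j) => a [u e]; rewrite e in hy; exact: (LM s0 (a :: u) _ hy).
    + move=> ey; rewrite /= in ey; subst y.
      apply: (LD (mm nx s0 i j) (bseq nx s0 i.+1) p) => //.
      exists (bseq nx s0 i), (skip (nx (bseq nx s0 i)) j), (nx (bseq nx s0 i)), [::], [::].
      split; [exact: skip_neq | by split].
pose G := Foliage (fun x => x = f s0 \/ M x) (fun x y => x = f s0 /\ M y)
  (fun x => [set y | leaf F x y /\ (x = f s0 -> y <> p)]).
exists G.
have GleafM : forall x, M x -> leaf G x = leaf F x.
  move=> x hx; apply/seteqP; split => y /=; [by case | move=> h; split => // e; exfalso; exact: Mneq hx e].
have Gleafv : leaf G (f s0) = leaf F (f s0) `\ p.
  apply/seteqP; split=> y /=; [case=> h1 h2; split => //; exact: h2 | case=> h1 h2; split=> // _; exact: h2].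
have Mne : exists x, M x by exists (f (mm nx s0 0 0)), 0, 0.
have GtreeG : is_tree G.
  split; first by move=> x y /= [-> hy]; split; [left | right].
  split; first by move=> x /= [ex hx]; exact: Mneq hx ex.
  split; first by move=> x y z /= [_ hy] [ey _]; exfalso; exact: Mneq hy ey.
  move=> x _; split.
    by move=> a c /= [-> _] [-> _]; left.
  move=> A hA [a ha]; exists a; split=> // a' ha' hne; exfalso; apply: hne.
  by rewrite (proj1 (hA _ ha')) (proj1 (hA _ ha)).
have fmaxG : fmax G = M.
  apply/seteqP; split => x /=.
  - case=> [[->|hx] hn] //; exfalso; apply: hn; case: Mne => y hy; by exists y.
  - move=> hx; split; [by right | case=> y [ex _]; exact: Mneq hx ex].
have sonsG : sons G (f s0) = M.
  apply/seteqP; split => x /=.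
  - by case=> _ [[_ hx] _].
  - move=> hx; split; [by right|split; [by split|case=> z [[_ hz] [ez _]]; exact: Mneq hz ez]].
have leastG : least_node G (f s0).
  split; [by left| move=> x /= [->|hx] hne; [by case: hne | by split]].
have core' : leaf G (f s0) = \bigcup_(x in M) leaf G x.
  rewrite Gleafv core; apply: eq_bigcupr => x hx; by rewrite GleafM.
have isv : forall x, fnode G x -> ~ fmax G x -> x = f s0.
  move=> x [->|hx] hnm //; exfalso; apply: hnm; by rewrite fmaxG.
split; first exact: GtreeG.
split; first by split; [exact: leastG | rewrite fmaxG sonsG].
split.
  split; first exact: Gleafv.
  split; first by rewrite fmaxG Gleafv core.
  by rewrite fmaxG; exact: Mdisj.
split.
  split; first exact: GtreeG.
  split.
    move=> x y hx hy; case=> [<-|h] //; case: h => ex hy'; subst x.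
    rewrite core' => z hz; by exists y.
  split.
    split; first exact: GtreeG.
    split.
      exists (f s0), (f (mm nx s0 0 0)).
      split; [by left|split; [right; by exists 0, 0| move=> e]].
      by apply: (Mneq (f (mm nx s0 0 0))); [exists 0, 0|].
    split.
      exists (f s0); split; first exact: leastG.
      move=> x; rewrite fmaxG; split.
      - by case=> [[->|hx] _]; [left|right].
      - case=> [->|hx]; (split; [by [left|right]|]); [exact: Hn|exact: Mnode].
    move=> x y /= hx _ hy _; split.
      by case=> -> hy'; exact: Mlt.
    case: Htree => _ [Hirr _].
    case: hx => [->|hx] h.
      case: hy h => [->|hy] h; [by case: (Hirr _ h)| by split].
    exfalso; case: hx h => i [j ->].
    case: hy => [->|[i' [j' ->]]] h.
      move/Ho/sp_size: h; case: (mm_s0 nx s0 i j) => a [u ->]; rewrite size_cat /=; lia.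
    case: (classic ((i, j) = (i', j'))) => e.
      by case: e h => -> -> /Hirr.
    by move/Ho: h; apply: diverge_nsp; apply: mm_div.
  split.
    by move=> r _ y /= [h _].
  by move=> m; rewrite fmaxG => hm; exact: GleafM.
split.
  apply/seteqP; split; last exact: sub0set.
  by move=> x [hx [hne hnm]]; apply: hne; exact: isv.
split.
  move=> x hx hnm; have ex := isv x hx hnm; subst x.
  exists (fun k => f (mm nx s0 (Cantor.of_nat k).1 (Cantor.of_nat k).2)).
  split.
    move=> n m; case en: (Cantor.of_nat n) => [i j]; case em: (Cantor.of_nat m) => [i' j'] /= e.
    apply: NNPP=> hne.
    have hp : (i, j) <> (i', j').
      by move=> ep; apply: hne; rewrite -(Cantor.cancel_to_of n) -(Cantor.cancel_to_of m) en em ep.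
    have h1 := mm_div nx s0 i j i' j' hp. have h2 := Hi _ _ e. exact: (diverge_neq _ _ h1 h2).
  split.
    by move=> n; rewrite sonsG; exists (Cantor.of_nat n).1, (Cantor.of_nat n).2.
  move=> y; rewrite sonsG => -[i [j ->]].
  by exists (Cantor.to_nat (i, j)); rewrite Cantor.cancel_of_to.
split.
  move=> x hx hnm; have ex := isv x hx hnm; subst x.
  split; first by rewrite sonsG core'.
  move=> s s'; rewrite sonsG => hs hs' hne; rewrite !GleafM //; exact: Mdisj.
split.
  move=> x [->|hx].
    rewrite core'; apply: bigcup_open => i hi; rewrite GleafM //; exact: Hopen (Mnode _ hi).
  rewrite GleafM //; apply: Hopen; exact: Mnode.
split.
  move=> C [hCn hCc] [c hc].
  case: (classic (exists w, C w /\ w <> f s0)) => [[w [hw hwne]]|hno].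
    exists w; split; first exact: hCn.
    move=> c' hc'; case: (hCc _ _ hc' hw) => [->|[h|h]]; [by left| by right| ].
    by exfalso; case: h => ew _; exact: hwne ew.
  exists (f s0); split; first by left.
  move=> c' hc'; left; apply: NNPP => hn; apply: hno; by exists c'.
split.
  move=> k hk; case: k hk => [|[|k]] hk //.
  - exists (f s0); split; first by left.
    exists [::]; split; first by constructor.
    split=> // y; split => //= -[_ hM]; exact: Mneq hM erefl.
  - exists (f (mm nx s0 0 0)); split; first by right; exists 0, 0.
    exists [:: f s0]; split.
      by constructor; [by [] | constructor].
    split=> // y /=; split.
    + by case=> [<-|[]]; split => //; exists 0, 0.
    + by case=> -> _; left.
case=> x [hx [s [hnd [hl hs]]]].
case: s hnd hl hs => [|a [|a' [|a'' s]]] hnd hl hs //.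
have ha := proj1 (hs a) (or_introl erefl).
have ha' := proj1 (hs a') (or_intror (or_introl erefl)).
move/List.NoDup_cons_iff: hnd => [hn _]; apply: hn.
by rewrite /= ha.1 ha'.1; left.
Qed.
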